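(* Let $K\subseteq\mathbb{R}^{n}$ be compact and let $T\subseteq\mathbb{R}^{n}$ be compact with non-empty interior. Then \[ \max\left\{\frac{\mathrm{Vol}(K)}{\mathrm{Vol}(T)},1\right\}\le M_{\omega}(K,T). \]
   Context: $\mathrm{Vol}$ is Lebesgue measure. $\mathbbm{1}_A$ is the indicator of $A$. $\mathcal{D}_+^n$ is the set of non-negative finite discrete measures on $\mathbb{R}^n$ (finite sums $\sum_i\omega_i\delta_{x_i}$, $\omega_i\ge0$); $(\nu*\mathbbm{1}_T)(x)=\int\mathbbm{1}_T(x-y)\,d\nu(y)$. $M_\omega(K,T)=\sup\{\nu(K):\nu\in\mathcal{D}_+^n,\ \nu*\mathbbm{1}_T\le1\text{ on }\mathbb{R}^n\}$. *)

(* Defs.v *)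
From HB Require Import structures.
From mathcomp Require Import all_boot all_order all_algebra.
From mathcomp Require Import all_classical all_reals all_analysis.
Set Implicit Arguments. Unset Strict Implicit. Unset Printing Implicit Defensive.
Import Order.TTheory GRing.Theory Num.Theory.
Import numFieldNormedType.Exports.
Local Open Scope classical_set_scope.
Local Open Scope ring_scope.

Section Defs.
Variables (R : realType) (n : nat).

Definition box (a b : 'I_n -> R) : set 'rV[R]_n :=
  [set x | forall i : 'I_n, a i <= x ord0 i <= b i].

Definition boxvol (a b : 'I_n -> R) : R :=
  \prod_(i < n) Num.max 0 (b i - a i).

(* On Lebesgue measurable sets (in particular
   compact sets) this is the n-dimensional Lebesgue measure Vol. *)
Definition lebesgue_outer (A : set 'rV[R]_n) : \bar R :=
  ereal_inf [set s : \bar R | exists (a b : nat -> 'I_n -> R),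
     A `<=` \bigcup_k box (a k) (b k) /\
     s = (\sum_(0 <= k <oo) (boxvol (a k) (b k))%:E)%E].

(* Vol, real-valued (finite on bounded sets, e.g. compact sets) *)
Definition Vol (A : set 'rV[R]_n) : R := fine (lebesgue_outer A).

(* A non-negative finite discrete measure  nu = sum_i w_i delta_{x_i}
   is represented by the finite list of its atoms (w_i, x_i), w_i >= 0. *)
Definition dmeasure (s : seq (R * 'rV[R]_n)) (A : set 'rV[R]_n) : R :=
  \sum_(p <- s) p.1 * \1_A p.2.

(* (nu * 1_T)(x) = int 1_T(x - y) dnu(y) *)
Definition dconv (s : seq (R * 'rV[R]_n)) (T : set 'rV[R]_n) (x : 'rV[R]_n) : R :=
  \sum_(p <- s) p.1 * \1_T (x - p.2).

Definition discrete_nonneg (s : seq (R * 'rV[R]_n)) : Prop :=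
  forall p, p \in s -> 0 <= p.1.

Definition M_omega (K T : set 'rV[R]_n) : \bar R :=
  ereal_sup [set (dmeasure s K)%:E | s in
    [set s | discrete_nonneg s /\ forall x, dconv s T x <= 1]].

End Defs.

(* Main.v *)
Require Import Defs.
From HB Require Import structures.
From mathcomp Require Import all_boot all_order all_algebra.
From mathcomp Require Import all_classical all_reals all_analysis.
From mathcomp Require Import ring lra finmap.
Import Order.TTheory GRing.Theory Num.Theory.
Import numFieldNormedType.Exports.
Local Open Scope classical_set_scope.
Local Open Scope ring_scope.

Lemma prod_addt_le (R : realType) (I : Type) (r : seq I) (m : I -> R) (t : R) :
  (forall i, 0 <= m i) -> 0 <= t <= 1 ->
  \prod_(i <- r) (m i + t) <=
  \prod_(i <- r) m i + t * ((size r)%:R * \prod_(i <- r) (m i + 1)).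
Proof.
move=> m0 /andP[t0 t1]; elim: r => [|x r IH].
  by rewrite !big_nil /= mul0r mulr0 addr0.
rewrite !big_cons /=.
set P := \prod_(i <- r) (m i + t) in IH *.
set A := \prod_(i <- r) m i in IH *.
set C := \prod_(i <- r) (m i + 1) in IH *.
have P0 : 0 <= P by apply: prodr_ge0 => i _; have := m0 i; lra.
have A0 : 0 <= A by apply: prodr_ge0.
have PC : P <= C by apply: ler_prod => i _; have := m0 i; lra.
have mx := m0 x.
rewrite -addn1 natrD.
have s0 : 0 <= (size r)%:R :> R by [].
set s := (size r)%:R in IH s0 *.
have st1 : m x * P <= m x * (A + t * (s * C)) by apply: ler_wpM2l.
have st2 : t * P <= t * C by apply: ler_wpM2l.
have C0 : 0 <= C by apply: prodr_ge0 => i _; have := m0 i; lra.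
have st3 : 0 <= t * C * (s + m x) by apply: mulr_ge0; [apply: mulr_ge0|lra].
have -> : (m x + t) * P = m x * P + t * P by ring.
have -> : t * ((s + 1) * ((m x + 1) * C)) = m x * (t * (s * C)) + t * C + t * C * (s + m x) by ring.
lra.
Qed.

Lemma count_le_sum (T K : Type) (a : pred T) (b : K -> pred T) (l : seq K) (s : seq T) :
  (forall z, a z -> has (fun k => b k z) l) ->
  (count a s <= \sum_(k <- l) count (b k) s)%N.
Proof.
move=> H; elim: s => [|z s IH]; first by rewrite big1.
rewrite /= big_split /=; apply: leq_add => //.
case az: (a z) => //; have := H z az.
elim: l {IH H} => [//|k l IHl] /=; rewrite big_cons.
case: (b k z) => /= [_|]; first by rewrite addn_gt0.
by move=> /IHl; rewrite add0n.
Qed.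

From mathcomp Require Import zify.

Section Cells.
Variables (R : realType) (n : nat).

Definition cell (d : R) (z : 'rV[R]_n) : {ffun 'I_n -> int} :=
  [ffun i => Num.floor (z ord0 i / d)].

Lemma nat_factor_le (d lo hi : R) (L H : int) : 0 < d ->
  L = Num.floor (lo / d) -> H = Num.floor (hi / d) ->
  (absz (Num.max 0 (H - L + 1)))%:R * d <= Num.max 0 (hi - lo) + 2 * d.
Proof.
move=> d0 eL eH.
rewrite natr_absz ger0_norm ?le_max ?lexx //.
have [hle|hgt] := leP (H - L + 1) 0.
  have -> : ((0:int)%:~R : R) = 0 by []. rewrite mul0r; apply: addr_ge0; [by rewrite le_max lexx|].
  by apply: mulr_ge0 => //; apply: ltW.
have HH : H%:~R <= hi / d by rewrite eH; have /andP[] := floor_itv (hi / d).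
have LL : lo / d < L%:~R + 1.
  by rewrite eL; have /andP[_] := floor_itv (lo / d); rewrite intrD.
rewrite !intrD intrN.
have : (H%:~R - L%:~R + 1%:~R) <= (hi - lo) / d + 2.
  rewrite mulrBl; lra.
move=> h.
have : (H%:~R - L%:~R + 1%:~R) * d <= ((hi - lo) / d + 2) * d.
  by apply: ler_wpM2r => //; apply: ltW.
move=> h2; apply: (le_trans h2).
rewrite mulrDl -mulrA mulVf ?gt_eqF // mulr1 [2 * d]mulrC lerD2r; by rewrite le_max lexx orbT.
Qed.

Lemma cell_count (d : R) (lo hi : 'I_n -> R) (P : pred 'rV[R]_n) (zs : seq 'rV[R]_n) :
  0 < d -> uniq (map (cell d) zs) ->
  (forall z, z \in zs -> P z -> forall i, lo i <= z ord0 i <= hi i) ->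
  (count P zs)%:R * d ^+ n <= \prod_(i < n) (Num.max 0 (hi i - lo i) + 2 * d).
Proof.
move=> d0 uz Hb.
pose L i := Num.floor (lo i / d).
pose H i := Num.floor (hi i / d).
pose N i := absz (Num.max 0 (H i - L i + 1)).
pose g (j : {dffun forall i, 'I_(N i)}) : {ffun 'I_n -> int} :=
  [ffun i => L i + ((j i : nat) : int)].
have us1 : uniq (map (cell d) (seq.filter P zs)).
  by apply: subseq_uniq uz; apply: map_subseq; apply: filter_subseq.
have sub : {subset map (cell d) (seq.filter P zs) <= codom g}.
  move=> c /mapP[z]; rewrite mem_filter => /andP[Pz zin] ->.
  have Hz : forall i, (absz (Num.floor (z ord0 i / d) - L i) < N i)%N.
    move=> i; have /andP[l h] := Hb z zin Pz i.
    have l' : L i <= Num.floor (z ord0 i / d).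
      by apply: le_floor; apply: ler_wpM2r; [rewrite invr_ge0 ltW|].
    have h' : Num.floor (z ord0 i / d) <= H i.
      by apply: le_floor; apply: ler_wpM2r; [rewrite invr_ge0 ltW|].
    rewrite /N; lia.
  have -> : cell d z = g (finfun (fun i => Ordinal (Hz i))).
    apply/ffunP => i; rewrite /g /cell !ffunE /=.
    have /andP[l h] := Hb z zin Pz i.
    have l' : L i <= Num.floor (z ord0 i / d).
      by apply: le_floor; apply: ler_wpM2r; [rewrite invr_ge0 ltW|].
    by rewrite gez0_abs ?subr_ge0 // addrCA subrr addr0.
  exact: codom_f.
have := uniq_leq_size us1 sub.
rewrite size_map size_filter size_codom card_dep_ffun => hc.
have hc' : ((count P zs)%:R : R) <= (\prod_(i < n) N i)%:R.
  rewrite ler_nat; apply: (leq_trans hc).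
  rewrite foldrE big_map /=.
  under eq_bigr do rewrite card_ord.
  by rewrite big_enum.
apply: (le_trans (ler_wpM2r _ hc')); first by rewrite exprn_ge0 // ltW.
have -> : d ^+ n = \prod_(i < n) d by rewrite prodr_const card_ord.
rewrite natr_prod -big_split /=.
apply: ler_prod => i _; apply/andP; split.
  by apply: mulr_ge0 => //; apply: ltW.
exact: nat_factor_le.
Qed.

Definition cellN (d : R) (lo hi : 'I_n -> R) (i : 'I_n) : nat :=
  absz (Num.max 0 (Num.floor (hi i / d) - Num.floor (lo i / d) + 1)).

Definition cellg (d : R) (lo hi : 'I_n -> R)
  (j : {dffun forall i, 'I_(cellN d lo hi i)}) : {ffun 'I_n -> int} :=
  [ffun i => Num.floor (lo i / d) + ((j i : nat) : int)].

Lemma cell_codom (d : R) (lo hi : 'I_n -> R) (z : 'rV[R]_n) : 0 < d ->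
  (forall i, lo i <= z ord0 i <= hi i) -> cell d z \in codom (cellg d lo hi).
Proof.
move=> d0 Hb.
pose L i := Num.floor (lo i / d).
pose H i := Num.floor (hi i / d).
have Hz : forall i, (absz (Num.floor (z ord0 i / d) - L i) < cellN d lo hi i)%N.
  move=> i; have /andP[l h] := Hb i.
  have l' : L i <= Num.floor (z ord0 i / d).
    by apply: le_floor; apply: ler_wpM2r; [rewrite invr_ge0 ltW|].
  have h' : Num.floor (z ord0 i / d) <= H i.
    by apply: le_floor; apply: ler_wpM2r; [rewrite invr_ge0 ltW|].
  rewrite /cellN -/(H i) -/(L i) max_r; [lia|lia].
have -> : cell d z = cellg d lo hi (finfun (fun i => Ordinal (Hz i))).
  apply/ffunP => i; rewrite /cellg /cell !ffunE /=.
  have /andP[l h] := Hb i.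
  have l' : L i <= Num.floor (z ord0 i / d).
    by apply: le_floor; apply: ler_wpM2r; [rewrite invr_ge0 ltW|].
  by rewrite gez0_abs ?subr_ge0 // addrCA subrr addr0.
exact: codom_f.
Qed.

End Cells.
Arguments cell {R n}.
Arguments cellN {R n}.
Arguments cellg {R n}.
Arguments cell_codom {R n}.
Arguments cell_count {R n}.

Section CoverK.
Variables (R : realType) (n : nat).

Lemma boxvol_empty (a b : 'I_n -> R) : (0 < n)%N -> (forall i, b i - a i <= 0) ->
  boxvol a b = 0.
Proof.
move=> n0 H; rewrite /boxvol (eq_bigr (fun=> 0)); last by move=> i _; rewrite max_l.
by rewrite prodr_const card_ord expr0n; case: n n0 {a b H}.
Qed.

Lemma cover_K (K : set 'rV[R]_n) (B d : R) : (0 < n)%N -> 0 < d ->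
  (forall z, K z -> forall i, -B <= z ord0 i <= B) ->
  exists zs : seq 'rV[R]_n, (forall z, z \in zs -> K z) /\ uniq (map (cell d) zs) /\
   (lebesgue_outer K <= ((size zs)%:R * d ^+ n)%:E)%E.
Proof.
move=> n0 d0 HB.
pose lo := fun _ : 'I_n => -B.
pose hi := fun _ : 'I_n => B.
pose hit (c : {ffun 'I_n -> int}) := `[< exists z, K z /\ cell d z = c >].
pose cs := undup [seq c <- codom (cellg d lo hi) | hit c].
pose pick c := get [set z | K z /\ cell d z = c].
have pickP : forall c, c \in cs -> K (pick c) /\ cell d (pick c) = c.
  move=> c; rewrite mem_undup mem_filter => /andP[/asboolP hz _].
  exact: (getPex hz).
pose zs := map pick cs.
have mapzs : map (cell d) zs = cs.
  rewrite -map_comp -[RHS]map_id; apply/eq_in_map => c /pickP[] /=.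
  by move=> _ ->.
exists zs; split; [|split].
- by move=> z /mapP[c cin ->]; exact: (pickP c cin).1.
- by rewrite mapzs undup_uniq.
pose a k i := if (k < size zs)%N then d * (cell d (nth 0 zs k) i)%:~R else 1.
pose b k i := if (k < size zs)%N then d * (cell d (nth 0 zs k) i)%:~R + d else 0.
apply: (@le_trans _ _ (\sum_(0 <= k <oo) (boxvol (a k) (b k))%:E)%E).
  apply: ereal_inf_lbound; exists a, b; split => //.
  move=> z Kz.
  have cin : cell d z \in cs.
    rewrite mem_undup mem_filter; apply/andP; split.
      by apply/asboolP; exists z.
    by apply: cell_codom => // i; exact: HB.
  have [Kz' cz'] := pickP _ cin.
  have zin : pick (cell d z) \in zs by apply: map_f.
  exists (index (pick (cell d z)) zs) => //.
  move=> i; rewrite /a /b index_mem zin nth_index // cz' ffunE.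
  have /andP[l h] := floor_itv (z ord0 i / d).
  apply/andP; split.
    by rewrite mulrC -ler_pdivlMr.
  move: h; rewrite intrD ltr_pdivrMr // mulrDl mul1r [d * _]mulrC => h; lra.
rewrite (nneseries_split 0 (size zs)); last first.
  by move=> k _; rewrite lee_fin; apply: prodr_ge0 => i _; rewrite le_max lexx.
rewrite add0n eseries0; last first.
  move=> k kge _; rewrite boxvol_empty //.
  by move=> i; rewrite /a /b ltnNge kge /=; lra.
rewrite adde0 sumEFin lee_fin.
rewrite (eq_big_nat _ _ (F2 := fun=> d ^+ n)); last first.
  move=> k /andP[_ klt]; rewrite /boxvol /a /b klt.
  rewrite (eq_bigr (fun=> d)); last first.
    by move=> i _; rewrite addrAC subrr add0r max_r // ltW.
  by rewrite prodr_const card_ord.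
by rewrite sumr_const_nat subn0 mulr_natl.
Qed.

End CoverK.

Section EnlargeT.
Variables (R : realType) (n : nat).

Definition obox (a b : 'I_n -> R) : set 'rV[R]_n :=
  [set x | forall i : 'I_n, a i < x ord0 i < b i].

Lemma obox_open (a b : 'I_n -> R) : open (obox a b).
Proof.
rewrite openE => x xin.
exists (fun (i : 'I_1) j => `]a j, b j[%classic).
  move=> i j /=; apply: open_nbhs_nbhs; split; first exact: interval_open.
  by rewrite /= in_itv /=; rewrite (ord1 i); exact: xin.
by move=> y /= Hy i; have := Hy ord0 i; rewrite /= in_itv.
Qed.

Lemma enlarge (a b : 'I_n -> R) (e : R) : 0 < e ->
  exists eta, 0 < eta /\
    boxvol (fun i => a i - eta) (fun i => b i + eta) <= boxvol a b + e.
Proof.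
move=> e0.
pose m i := Num.max 0 (b i - a i).
have m0 : forall i, 0 <= m i by move=> i; rewrite le_max lexx.
pose C := (size (index_enum 'I_n))%:R * \prod_(i < n) (m i + 1).
have C0 : 0 <= C by apply: mulr_ge0 => //; apply: prodr_ge0 => i _; have := m0 i; lra.
pose t := Num.min 1 (e / (C + 1)).
have t0 : 0 < t by rewrite lt_min ltr01 /= divr_gt0 //; lra.
have t1 : t <= 1 by rewrite ge_min lexx.
have te : t <= e / (C + 1) by rewrite ge_min lexx orbT.
exists (t / 2); split; first by lra.
have h1 : boxvol (fun i => a i - t / 2) (fun i => b i + t / 2) <= \prod_(i < n) (m i + t).
  apply: ler_prod => i _; apply/andP; split; first by rewrite le_max lexx.
  rewrite /m; have -> : b i + t / 2 - (a i - t / 2) = (b i - a i) + t by field.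
  have hm : 0 <= Num.max 0 (b i - a i) by rewrite le_max lexx.
  have hm2 : b i - a i <= Num.max 0 (b i - a i) by rewrite le_max lexx orbT.
  rewrite ge_max; apply/andP; split; lra.
apply: (le_trans h1); apply: (le_trans (@prod_addt_le R _ _ m t m0 _)); first lra.
change (boxvol a b) with (\prod_(i < n) m i).
rewrite lerD2l -/C.
have : t * C <= e / (C + 1) * C by apply: ler_wpM2r.
have : e / (C + 1) * C <= e.
  rewrite mulrAC ler_pdivrMr; last lra.
  nra.
lra.
Qed.

Lemma seq_nat_bound (s : seq nat) : exists N, forall k, k \in s -> (k < N)%N.
Proof.
elim: s => [|x s [N HN]]; first by exists 0%N.
exists (maxn N x.+1) => k; rewrite inE => /orP[/eqP ->|/HN]; lia.
Qed.

Lemma finite_cover_T (T : set 'rV[R]_n) (v e : R) : compact T ->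
  lebesgue_outer T = v%:E -> 0 < e ->
  exists (s : seq nat) (lo hi : nat -> 'I_n -> R),
    (forall x, T x -> exists2 k, k \in s & obox (lo k) (hi k) x) /\
    \sum_(k <- s) boxvol (lo k) (hi k) <= v + e.
Proof.
move=> cT vT e0.
have e20 : 0 < e / 2 by rewrite divr_gt0.
have fT : lebesgue_outer T \is a fin_num by rewrite vT.
have [x [a [b [Tcov xE]]] xlt0] := lb_ereal_inf_adherent e20 fT.
have xlt : (x < v%:E + (e / 2)%:E)%E by rewrite -vT.
subst x.
have p2 : forall k, 0 < (e / 2) / (2 ^ k.+1)%:R :> R.
  by move=> k; rewrite divr_gt0 // ltr0n expn_gt0.
have [eta Heta] := choice (fun k => enlarge (a k) (b k) _ (p2 k)).
pose lo k i := a k i - eta k.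
pose hi k i := b k i + eta k.
have ser : (\sum_(0 <= k <oo) (boxvol (lo k) (hi k))%:E <= v%:E + e%:E)%E.
  apply: (@le_trans _ _ (\sum_(0 <= k <oo) ((boxvol (a k) (b k))%:E +
           ((e / 2) / (2 ^ k.+1)%:R)%:E))%E).
    apply: lee_nneseries.
      by move=> k _ _; rewrite lee_fin; apply: prodr_ge0 => i _; rewrite le_max lexx.
    by move=> k _; rewrite -EFinD lee_fin; exact: (Heta k).2.
  apply: (le_trans (epsilon_trick _ _ _)).
  - by move=> k; rewrite lee_fin; apply: prodr_ge0 => i _; rewrite le_max lexx.
  - exact: ltW.
  apply: (le_trans (leeD (ltW xlt) (lexx ((e / 2)%:E)))).
  by rewrite -!EFinD lee_fin; lra.
have := cT; rewrite compact_cover cover_compactE => /(_ nat setT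
  (fun k => T `&` obox (lo k) (hi k))).
case.
- exists (fun k => obox (lo k) (hi k)) => // k _; exact: obox_open.
- move=> z Tz; have [k _ Bk] := Tcov z Tz.
  exists k => //; split => // i; have /andP[l h] := Bk i.
  have := (Heta k).1; rewrite /lo /hi => ek; apply/andP; split; lra.
move=> D' _ D'cov.
have [N HN] := seq_nat_bound (finmap.enum_fset D').
exists [seq k <- iota 0 N | k \in D'], lo, hi; split.
  move=> z Tz; have [k kin [_ Ok]] := D'cov z Tz.
  by exists k => //; rewrite mem_filter kin mem_iota /= add0n HN.
rewrite -lee_fin; apply: le_trans ser.
rewrite big_filter -sumEFin.
apply: (le_trans _ (nneseries_lim_ge N _)); last first.
  by move=> k _ _; rewrite lee_fin; apply: prodr_ge0 => i _; rewrite le_max lexx.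
rewrite big_mkcond /= [in leRHS]/index_iota subn0.
apply: lee_sum => k _; case: (k \in D') => //.
by rewrite lee_fin; apply: prodr_ge0 => i _; rewrite le_max lexx.
Qed.

End EnlargeT.
Arguments obox {R n}.

Section Main.
Variables (R : realType) (n : nat).

Lemma sum_indic (A : set 'rV[R]_n) (f : 'rV[R]_n -> 'rV[R]_n) (w : R) (zs : seq 'rV[R]_n) :
  \sum_(z <- zs) w * \1_A (f z) = w * (count (fun z => f z \in A) zs)%:R.
Proof.
elim: zs => [|z zs IH]; first by rewrite big_nil mulr0.
by rewrite big_cons IH /= indicE natrD mulrDr.
Qed.

Lemma outer_ge0 (A : set 'rV[R]_n) : (0 <= lebesgue_outer A)%E.
Proof.
apply: le_ereal_inf_tmp => x [a [b [_ ->]]].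
by apply: nneseries_ge0 => k _ _; rewrite lee_fin; apply: prodr_ge0 => i _; rewrite le_max lexx.
Qed.

Lemma M_ge1 (K T : set 'rV[R]_n) : K !=set0 -> (1%:E <= M_omega K T)%E.
Proof.
move=> [z Kz].
apply: ereal_sup_ubound; exists [:: (1, z)].
  split; first by move=> p; rewrite inE => /eqP -> /=.
  move=> x; rewrite /dconv big_cons big_nil addr0 /= mul1r indicE.
  by case: (_ \in _).
by rewrite /dmeasure big_cons big_nil addr0 /= mul1r indicE mem_set.
Qed.

Lemma bounded_coord (K : set 'rV[R]_n) : compact K ->
  exists B : R, forall z, K z -> forall i, -B <= z ord0 i <= B.
Proof.
move=> cK; have [M [Mreal normAltM]] := compact_bounded cK.
exists (M + 1) => v /(normAltM (M + 1)) normvleM i.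
have : `|v ord0 i : R| <= M + 1.
  apply: le_trans (normvleM _); last by rewrite ltrDl.
  have /mapP[j Hj ->] : `|v ord0 i| \in [seq `|v x.1 x.2| | x : 'I_1 * 'I_n].
    by apply/mapP; exists (ord0, i) => //=; rewrite mem_enum.
  by rewrite [leRHS]/Num.Def.normr /= mx_normrE; apply/bigmax_geP; right => /=; exists j.
by rewrite ler_norml.
Qed.

Lemma main_hard (K T : set 'rV[R]_n) (vT r : R) : (0 < n)%N ->
  compact K -> compact T -> lebesgue_outer T = vT%:E -> 0 < vT -> 0 < r ->
  r * vT < Vol K -> (r%:E <= M_omega K T)%E.
Proof.
move=> n0 cK cT oT vT0 r0 rvK.
set vK := Vol K in rvK *.
have vK0 : 0 < vK by apply: lt_trans rvK; apply: mulr_gt0.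
have vTlt : vT < vK / r by rewrite ltr_pdivlMr // mulrC.
pose e := (vK / r - vT) / 2.
have e0 : 0 < e by rewrite /e divr_gt0 // subr_gt0.
have [s [lo [hi [cov sumS]]]] := @finite_cover_T R n T vT e cT oT e0.
pose Q := \sum_(k <- s) ((size (index_enum 'I_n))%:R *
             \prod_(i < n) (Num.max 0 (hi k i - lo k i) + 1)).
have Q0 : 0 <= Q.
  apply: sumr_ge0 => k _; apply: mulr_ge0 => //; apply: prodr_ge0 => i _.
  by apply: addr_ge0 => //; rewrite le_max lexx.
pose d := Num.min (1 / 2) (e / (2 * (Q + 1))).
have d0 : 0 < d by rewrite lt_min divr_gt0 //= divr_gt0 //; lra.
have d1 : d <= 1 / 2 by rewrite ge_min lexx.
have de : d <= e / (2 * (Q + 1)) by rewrite ge_min lexx orbT.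
have sumB : \sum_(k <- s) \prod_(i < n) (Num.max 0 (hi k i - lo k i) + 2 * d) <= vK / r.
  apply: (@le_trans _ _ (\sum_(k <- s) (boxvol (lo k) (hi k) + 2 * d *
     ((size (index_enum 'I_n))%:R * \prod_(i < n) (Num.max 0 (hi k i - lo k i) + 1))))).
    apply: ler_sum => k _.
    apply: (@prod_addt_le R); first by move=> i; rewrite le_max lexx.
    by apply/andP; split; lra.
  rewrite big_split /= -mulr_sumr -/Q.
  have : 2 * d * Q <= e.
    have h1 : 2 * d * Q <= 2 * (e / (2 * (Q + 1))) * Q.
      by apply: ler_wpM2r => //; apply: ler_wpM2l.
    apply: (le_trans h1).
    have -> : 2 * (e / (2 * (Q + 1))) * Q = e * (Q / (Q + 1)).
      by field; apply/eqP; lra.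
    have q1 : Q / (Q + 1) <= 1 by rewrite ler_pdivrMr; lra.
    by have := ler_wpM2l (ltW e0) q1; rewrite mulr1.
  move: sumS; rewrite /e; lra.
have [B HB] := bounded_coord K cK.
have [zs [zK [uz oK]]] := @cover_K R n K B d n0 d0 HB.
have vKle : vK <= (size zs)%:R * d ^+ n.
  rewrite /vK /Vol; move: oK; case: (lebesgue_outer K) => [x||] //=.
  move=> _; apply: mulr_ge0 => //; exact: exprn_ge0 (ltW d0).
pose w := d ^+ n * r / vK.
have w0 : 0 <= w by rewrite /w divr_ge0 ?mulr_ge0 ?exprn_ge0 // ltW.
pose nu := map (fun z => (w, z)) zs.
have dmE : dmeasure nu K = w * (size zs)%:R.
  rewrite /dmeasure big_map /= sum_indic; congr (_ * _%:R).
  rewrite -[RHS]count_predT; apply: eq_in_count => z /zK Kz /=.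
  exact: mem_set.
apply: (@le_trans _ _ (dmeasure nu K)%:E).
  rewrite dmE lee_fin /w.
  have -> : d ^+ n * r / vK * (size zs)%:R = ((size zs)%:R * d ^+ n) * r / vK.
    by ring.
  rewrite ler_pdivlMr // [r * _]mulrC; apply: ler_wpM2r; [exact: ltW|exact: vKle].
apply: ereal_sup_ubound; exists nu => //; split.
  by move=> p /mapP[z _ ->].
move=> x; rewrite /dconv big_map /= sum_indic.
pose cnt := count (fun z => (x - z) \in T) zs.
have cntle : cnt%:R * d ^+ n <= vK / r.
  apply: le_trans sumB.
  have hc : (cnt <= \sum_(k <- s) count (fun z => (x - z)%R \in obox (lo k) (hi k)) zs)%N.
    apply: count_le_sum => z /set_mem Tz.
    have [k kin Ok] := cov _ Tz; apply/hasP; exists k => //; exact: mem_set.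
  apply: (@le_trans _ _ ((\sum_(k <- s) count (fun z => (x - z)%R \in obox (lo k) (hi k)) zs)%:R * d ^+ n)).
    by apply: ler_wpM2r; [exact: exprn_ge0 (ltW d0)|rewrite ler_nat].
  rewrite natr_sum mulr_suml; apply: ler_sum => k _.
  have Eq : forall i, (x ord0 i - lo k i) - (x ord0 i - hi k i) = hi k i - lo k i.
    by move=> i; ring.
  rewrite (eq_bigr (fun i => Num.max 0 ((x ord0 i - lo k i) - (x ord0 i - hi k i)) + 2 * d)); last first.
    by move=> i _; rewrite Eq.
  apply: (@cell_count R n d (fun i => x ord0 i - hi k i) (fun i => x ord0 i - lo k i)
    (fun z => (x - z)%R \in obox (lo k) (hi k)) zs d0 uz).
  move=> z _ /set_mem Oz i; have := Oz i; rewrite !mxE => /andP[h1 h2].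
  by apply/andP; split; lra.
rewrite /w -/cnt.
have -> : d ^+ n * r / vK * cnt%:R = (cnt%:R * d ^+ n) * r / vK.
  by ring.
rewrite ler_pdivrMr // mul1r.
have := ler_wpM2r (ltW r0) cntle.
by rewrite divfK ?gt_eqF.
Qed.

End Main.

Theorem proposition2p10 (R : realType) (n : nat) (K T : set 'rV[R]_n) :
  compact K -> K !=set0 ->
  compact T -> (interior T) !=set0 ->
  ((Num.max (Vol K / Vol T) 1)%:E <= M_omega K T)%E.
Proof.
move=> cK K0 cT [t /interior_subset Tt].
have M1 := @M_ge1 R n K T K0.
have ratio_le1 : Vol K / Vol T <= 1 -> ((Num.max (Vol K / Vol T) 1)%:E <= M_omega K T)%E.
  by move=> h; rewrite max_r.
case: n K T cK K0 cT t Tt M1 ratio_le1 => [|n] K T cK K0 cT t Tt M1 ratio_le1.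
  apply: ratio_le1.
  have -> : K = T.
    case: K0 => z Kz; apply/seteqP; split => y _.
      by rewrite (thinmx0 y) -(thinmx0 t).
    by rewrite (thinmx0 y) -(thinmx0 z).
  have [->|v0] := eqVneq (Vol T) 0; first by rewrite invr0 mulr0.
  by rewrite mulfV.
have oT0 := @outer_ge0 R n.+1 T.
case EoT : (lebesgue_outer T) oT0 => [vT| |] // vT0.
- rewrite lee_fin in vT0.
  have [vz|vpos] := eqVneq vT 0.
    by apply: ratio_le1; rewrite /Vol EoT vz /= invr0 mulr0.
  have vTpos : 0 < vT by rewrite lt_neqAle eq_sym vpos.
  have VT : Vol T = vT by rewrite /Vol EoT.
  rewrite VT.
  case EM : (M_omega K T) M1 => [m| |] //; last by move=> _; exact: leey.
  rewrite lee_fin => m1; rewrite lee_fin ge_max m1 andbT.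
  rewrite leNgt; apply/negP => hlt.
  pose r := (m + Vol K / vT) / 2.
  have r0 : 0 < r by rewrite /r; lra.
  have rlt : r < Vol K / vT by rewrite /r; lra.
  have rvK : r * vT < Vol K by rewrite -ltr_pdivlMr.
  have := @main_hard R n.+1 K T vT r isT cK cT EoT vTpos r0 rvK.
  rewrite EM lee_fin => rm; move: hlt rm; rewrite /r; move: (Vol K / vT) => V h1 h2.
  have : V <= m by lra.
  by rewrite leNgt h1.
- by apply: ratio_le1; rewrite /Vol EoT /= invr0 mulr0.
Qed.
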